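(* Let $A,B\in\mathcal{M}_n$, let $\psi\colon H^*(M(A);\mathbb{Z})\to H^*(M(B);\mathbb{Z})$ be a graded ring isomorphism (also denoting its rationalization by $\psi$), and let $\sigma$ be a permutation of $\{1,\dots,n\}$ and $q_1,\dots,q_n$ nonzero rationals with $\psi(y^A_j)=q_jy^B_{\sigma(j)}$ for all $j$. Fix $j\in\{1,\dots,n\}$ and suppose $a\in\mathbb{Z}\setminus\{0\}$, $u\in H^2(M(B);\mathbb{Z})$ and $k\in\{1,\dots,n\}$ satisfy $u(u+a\alpha^B_k)=0$ and $\mathrm{ht}(u)<k$. (i) If $(\psi(x^A_j),\psi(x^A_j-\alpha^A_j))=(ax^B_k+u,\ a(x^B_k-\alpha^B_k)-u)$, then $q_j=a$, $k=\sigma(j)$, and $a^i_j=0$ for every $i$ with $\sigma(i)>\sigma(j)$. (ii) If $(\psi(x^A_j),\psi(x^A_j-\alpha^A_j))=(ax^B_k+u,\ -a(x^B_k-\alpha^B_k)+u)$, then $\alpha^A_j=2aq_i^{-1}y^A_i$ for some $i<j$.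
   Context: Let $\mathcal{M}_n$ be the set of integral strictly upper triangular $n\times n$ matrices $A=(A^i_j)$ ($A^i_j$ is the $(i,j)$ entry, and $A^i_j=0$ for $i\ge j$). For $A\in\mathcal{M}_n$, $M(A)$ denotes the Bott manifold obtained as the quotient of $(S^3)^n$ ($S^3\subset\mathbb{C}^2$ the unit sphere) by the free $(S^1)^n$-action $(g_1,\dots,g_n)\cdot((z_1,w_1),\dots,(z_n,w_n))=\big(((\prod_{k<j}g_k^{-A^k_j})g_jz_j,\ g_jw_j)\big)_{j=1}^n$. Let $x^A_j\in H^2(M(A);\mathbb{Z})$ be the first Chern class of the line bundle obtained as the quotient of $(S^3)^n\times\mathbb{C}$ where $g$ acts on the $\mathbb{C}$-factor by $g_j^{-1}$. Put $\alpha^A_j=\sum_{i<j}A^i_jx^A_i$. Then $H^*(M(A);\mathbb{Z})=\mathbb{Z}[x^A_1,\dots,x^A_n]/((x^A_j)^2-\alpha^A_jx^A_j\mid j=1,\dots,n)$. Define $y^A_j=x^A_j-\tfrac12\alpha^A_j\in H^2(M(A);\mathbb{Q})$. Let $a^i_j$ denote the $(i,j)$ entry of the matrix $(E-\tfrac12A)^{-1}$ ($E$ the identity matrix), so that $x^A_j=\sum_{i\le j}a^i_jy^A_i$. The same notation is used for $B$. For $v=\sum_i c_ix^B_i\in H^2(M(B);\mathbb{Z})$, the height $\mathrm{ht}(v)$ is $\max\{i\mid c_i\neq0\}$ (taken to be $0$ if $v=0$). *)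

(* Defs.v *)
From mathcomp Require Import all_boot all_order all_algebra all_fingroup.
From mathcomp Require Import mpoly.
Set Implicit Arguments. Unset Strict Implicit. Unset Printing Implicit Defensive.
Import Order.TTheory GRing.Theory Num.Theory.
Local Open Scope ring_scope.

(* Indices 1..n of the paper are the ordinals 'I_n (0..n-1). *)

(* A in M_n : integral strictly upper triangular n x n matrix *)
Definition strict_upper n (A : 'M[int]_n) : Prop :=
  forall i j : 'I_n, (j <= i)%N -> A i j = 0.

(* Elements of H^2(M(A);R) (R = int or rat) are written in the basis
   x^A_1..x^A_n as column vectors of coordinates. *)
Definition xvec (R : nzRingType) n (j : 'I_n) : 'cV[R]_n :=
  \col_i (if i == j then 1 else 0).

Definition alpha n (A : 'M[int]_n) (j : 'I_n) : 'cV[int]_n :=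
  \col_i (if (i < j)%N then A i j else 0).

Definition ratmx m p (M : 'M[int]_(m, p)) : 'M[rat]_(m, p) := map_mx intr M.

Definition yvec n (A : 'M[int]_n) (j : 'I_n) : 'cV[rat]_n :=
  ratmx (xvec _ j) - 2^-1 *: ratmx (alpha A j).

Definition acoef n (A : 'M[int]_n) (i j : 'I_n) : rat :=
  invmx (1%:M - 2^-1 *: ratmx A) i j.

(* height of v = sum_i c_i x_i : max{ i | c_i <> 0 } (1-indexed), 0 if v = 0 *)
Definition ht n (v : 'cV[int]_n) : nat :=
  \max_(i : 'I_n | v i 0 != 0) i.+1.

(* linear form sum_i v_i X_i in Z[X_1..X_n] representing v in H^2 *)
Definition linform n (v : 'cV[int]_n) : {mpoly int[n]} :=
  \sum_(i < n) v i 0 *: 'X_i.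

Definition rel n (A : 'M[int]_n) (j : 'I_n) : {mpoly int[n]} :=
  'X_j ^+ 2 - linform (alpha A j) * 'X_j.

(* membership in the ideal I_A = ( x_j^2 - alpha_j x_j | j ),
   so that H^*(M(A);Z) = Z[x_1..x_n] / I_A; p = 0 in H^*(M(A)) iff inI A p *)
Definition inI n (A : 'M[int]_n) (p : {mpoly int[n]}) : Prop :=
  exists c : 'I_n -> {mpoly int[n]}, p = \sum_(j < n) c j * rel A j.

(* the ring endomorphism of Z[x_1..x_n] sending x_j to the linear form given
   by the j-th column of P; every graded ring map H^*(M(A)) -> H^*(M(B))
   lifts uniquely (on generators) to such a substitution, where column j of P
   is the image of x^A_j in H^2(M(B);Z) in the basis x^B. *)
Definition subst n (P : 'M[int]_n) (p : {mpoly int[n]}) : {mpoly int[n]} :=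
  p \mPo [tuple linform (col j P) | j < n].

Definition induces_hom n (A B P : 'M[int]_n) : Prop :=
  forall p, inI A p -> inI B (subst P p).

Definition graded_ring_iso n (A B P : 'M[int]_n) : Prop :=
  induces_hom A B P /\
  exists Q : 'M[int]_n, induces_hom B A Q /\
    (forall p, inI A (subst Q (subst P p) - p)) /\
    (forall p, inI B (subst P (subst Q p) - p)).

(* Main.v *)
Set Warnings "-all".
Require Import Defs.
From mathcomp Require Import all_boot all_order all_algebra all_fingroup.
From mathcomp Require Import mpoly.
From mathcomp Require Import zify ring lra.
Set Implicit Arguments. Unset Strict Implicit.
Import Order.TTheory GRing.Theory Num.Theory.
Local Open Scope ring_scope.

Lemma yvecE n (B : 'M[int]_n) (l r : 'I_n) :
  yvec B l r 0 = (if r == l then 1 else 0) - 2^-1 * (if (r < l)%N then (B r l)%:~R else 0).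
Proof. by rewrite !mxE; case: (r == l); case: (r < l)%N. Qed.

Lemma ydiag n (B : 'M[int]_n) (l : 'I_n) : yvec B l l 0 = 1.
Proof. by rewrite yvecE eqxx ltnn mulr0 subr0. Qed.

Lemma ylow n (B : 'M[int]_n) (l r : 'I_n) : (l < r)%N -> yvec B l r 0 = 0.
Proof.
move=> h; rewrite yvecE.
have -> : (r == l) = false by apply/eqP => e; move: h; rewrite e ltnn.
rewrite ltnNge (ltnW h) /=.
by rewrite mulr0 subr0.
Qed.

Lemma tri_lemma n (B : 'M[int]_n) (s : 'S_n) (c : 'I_n -> rat) (v : 'cV[rat]_n) (t : nat) :
  \sum_i c i *: yvec B (s i) = v -> (forall r : 'I_n, (t <= r)%N -> v r 0 = 0) ->
  forall i, (t <= s i)%N -> c i = 0.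
Proof.
move=> hs hv.
suff H : forall d i, (n - d <= s i)%N -> (t <= s i)%N -> c i = 0.
  by move=> i; apply: (H n); rewrite subnn.
elim=> [|d IH] i h1 h2.
  by move: h1; rewrite subn0 leqNgt ltn_ord.
have E : (\sum_i c i *: yvec B (s i)) (s i) 0 = 0 by rewrite hs hv.
move: E; rewrite summxE (bigD1 i) //= mxE ydiag mulr1 big1 ?addr0 // => i2 ne.
rewrite mxE; case: (ltngtP (s i2) (s i)) => h.
- by rewrite ylow // mulr0.
- rewrite (IH i2) ?mul0r //; lia.
- by move: ne; rewrite (perm_inj (val_inj h)) eqxx.
Qed.

Definition Mof n (A : 'M[int]_n) : 'M[rat]_n := 1%:M - 2^-1 *: ratmx A.

Lemma Mof_unit n (A : 'M[int]_n) : strict_upper A -> Mof A \in unitmx.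
Proof.
move=> hA; rewrite unitmxE -det_tr det_trig.
  rewrite big1 ?unitr1 // => i _; rewrite !mxE hA // eqxx /=; lra.
apply/is_trig_mxP => i j h; rewrite !mxE hA ?(ltnW h) //.
have -> : (j == i) = false by apply/eqP => e; move: h; rewrite e ltnn.
rewrite /=; lra.
Qed.

Lemma expand n (A : 'M[int]_n) (w : 'cV[rat]_n) : strict_upper A ->
  w = \sum_l (invmx (Mof A) *m w) l 0 *: yvec A l.
Proof.
move=> hA; apply/matrixP => r z; rewrite (ord1 z) summxE.
have -> : w r 0 = (Mof A *m (invmx (Mof A) *m w)) r 0
  by rewrite mulmxA mulmxV ?Mof_unit // mul1mx.
rewrite mxE; apply: eq_bigr => l _; rewrite [in RHS]mxE yvecE mulrC; congr (_ * _).
rewrite !mxE; case: ltnP => h.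
  by case: (r == l).
by rewrite hA //; case: (r == l).
Qed.
Theorem lemma4p3 (n : nat) (A B P : 'M[int]_n)
  (hA : strict_upper A) (hB : strict_upper B)
  (hpsi : graded_ring_iso A B P)
  (sigma : 'S_n) (q : 'I_n -> rat) (hq : forall j, q j != 0)
  (hy : forall j : 'I_n,
      ratmx P *m yvec A j = q j *: yvec B (sigma j))
  (j : 'I_n) (a : int) (ha : a != 0) (u : 'cV[int]_n) (k : 'I_n)
  (hu : inI B (linform u * linform (u + a *: alpha B k)))
  (hht : (ht u < k.+1)%N) :
  (P *m xvec _ j = a *: xvec _ k + u ->
   P *m (xvec _ j - alpha A j) = a *: (xvec _ k - alpha B k) - u ->
   [/\ q j = a%:~R, k = sigma j &
       forall i : 'I_n, (sigma j < sigma i)%N -> acoef A i j = 0])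
  /\
  (P *m xvec _ j = a *: xvec _ k + u ->
   P *m (xvec _ j - alpha A j) = - (a *: (xvec _ k - alpha B k)) + u ->
   exists2 i : 'I_n, (i < j)%N &
     ratmx (alpha A j) = (2 * a%:~R / q i) *: yvec A i).
Proof.
split.
- move=> H1 H2.
  have Y : ratmx P *m yvec A j = a%:~R *: yvec B k.
    have -> : yvec A j = 2^-1 *: (ratmx (xvec _ j) + ratmx (xvec _ j - alpha A j)).
      apply/matrixP => r z; rewrite !mxE !(rmorphB, rmorphD, rmorphN, rmorphM) /=.
      by field.
    set v := (_ + _).
    rewrite (_ : ratmx P *m (2^-1 *: v) = 2^-1 *: (ratmx P *m v)); last by rewrite scalemxAr.
    rewrite /v mulmxDr -!map_mxM H1 H2.
    apply/matrixP => r z; rewrite !mxE !(rmorphB, rmorphD, rmorphN, rmorphM) /=.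
    by field.
  have E : forall r, q j * yvec B (sigma j) r 0 = a%:~R * yvec B k r 0.
    by move=> r; move: Y; rewrite hy => /matrixP /(_ r 0); rewrite !mxE.
  have ha' : (a%:~R : rat) != 0 by rewrite intr_eq0.
  have hk : k = sigma j.
    case: (ltngtP (sigma j) k) => h.
    - by move: (E k); rewrite ylow // ydiag mulr0 mulr1 => /esym/eqP; rewrite (negbTE ha').
    - by move: (E (sigma j)); rewrite ydiag ylow // mulr0 mulr1 => /eqP; rewrite (negbTE (hq j)).
    - exact: val_inj.
  have hqj : q j = a%:~R by move: (E k); rewrite -hk ydiag !mulr1.
  split => // i hi.
  have X := expand (ratmx (xvec _ j)) hA.
  have coef : forall l, (invmx (Mof A) *m ratmx (xvec _ j)) l 0 = acoef A l j.
    move=> l; rewrite mxE (bigD1 j) //= !mxE eqxx mulr1 big1 ?addr0 // => l2 ne.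
    by rewrite !mxE (negbTE ne) /= mulr0.
  have S : \sum_l (acoef A l j * q l) *: yvec B (sigma l) = ratmx (a *: xvec _ k + u).
    rewrite -H1 (_ : ratmx (P *m xvec _ j) = ratmx P *m ratmx (xvec _ j)); last by rewrite -map_mxM.
    rewrite {1}X mulmx_sumr; apply: eq_bigr => l _.
    by rewrite -scalemxAr hy scalerA coef.
  have hv : forall r : 'I_n, (k.+1 <= r)%N -> ratmx (a *: xvec _ k + u) r 0 = 0.
    move=> r hr; rewrite !mxE.
    have -> : (r == k) = false by apply/eqP => e; move: hr; rewrite e ltnn.
    have -> : u r 0 = 0.
      apply/eqP; apply/negPn/negP => hne.
      have := @leq_bigmax_cond _ (fun i : 'I_n => u i 0 != 0) (fun i : 'I_n => i.+1) r hne.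
      rewrite -/(ht u) => h2; move: (leq_ltn_trans h2 hht); rewrite ltnS leqNgt.
      by rewrite ltnW.
    by rewrite mulr0 addr0.
  have := tri_lemma S hv (i:=i); rewrite hk => /(_ hi) /eqP.
  by rewrite mulf_eq0 (negbTE (hq i)) orbF => /eqP.
- move=> H1 H2.
  have Y : ratmx P *m ratmx (alpha A j) = (2 * a%:~R) *: yvec B k.
    have -> : ratmx (alpha A j) = ratmx (xvec _ j) - ratmx (xvec _ j - alpha A j).
      by apply/matrixP => r z; rewrite !mxE !(rmorphB, rmorphD, rmorphN, rmorphM) /=; ring.
    rewrite mulmxBr -!map_mxM H1 H2.
    apply/matrixP => r z; rewrite !mxE !(rmorphB, rmorphD, rmorphN, rmorphM) /=.
    by field.
  pose i := (sigma^-1)%g k.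
  have hi : sigma i = k by rewrite /i permKV.
  have Z : ratmx P *m (ratmx (alpha A j) - (2 * a%:~R / q i) *: yvec A i) = 0.
    by rewrite mulmxBr Y -scalemxAr hy hi scalerA divfK ?hq // subrr.
  have W : ratmx (alpha A j) - (2 * a%:~R / q i) *: yvec A i = 0.
    move: Z; set w := _ - _ => Z.
    have S : \sum_l ((invmx (Mof A) *m w) l 0 * q l) *: yvec B (sigma l) = 0.
      transitivity (ratmx P *m w); last exact Z.
      rewrite [in RHS](expand w hA) mulmx_sumr; apply: eq_bigr => l _.
      by rewrite -scalemxAr hy scalerA.
    rewrite (expand w hA); apply: big1 => l _.
    have := tri_lemma S (t:=0) (fun r _ => mxE _ _ _ _) (i:=l) (leq0n _) => /eqP.
    by rewrite mulf_eq0 (negbTE (hq l)) orbF => /eqP ->; rewrite scale0r.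
  have W' := subr0_eq W.
  exists i => //.
  move: W' => /matrixP /(_ i 0); rewrite [in RHS]mxE ydiag mulr1 !mxE.
  case: ltnP => // _ /esym /eqP.
  rewrite !mulf_eq0 invr_eq0 intr_eq0 (negbTE ha) (negbTE (hq i)) /=.
  by [].
Qed.
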